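(* Let $n\in\mathbb{N}_+$ and suppose $X\sim\mathsf{Poi}(\lambda_1)$ or $X\sim\mathsf{B}(n,\frac{\lambda_1}{n})$, where $0\le\lambda_1\le n$. There exist universal constants $M_1>0$, $M_2>0$ (not depending on $\lambda_1,\lambda_2,n$) such that: (1) if $0\le\lambda_2\le n$ and $\lambda_2\ge\lambda_1$, then $(\lambda_2-\lambda_1)P(X\ge\lambda_2)\le M_1\,(\lambda_2\wedge\sqrt{\lambda_2})$; (2) if $\lambda_1\ge\lambda_2\ge1$, then $(\lambda_1-\lambda_2)P(X\le\lambda_2)\le M_2\sqrt{\lambda_2}$.
   Context: $\mathsf{Poi}(\lambda)$ is the Poisson distribution with mean $\lambda$, $\mathsf{B}(n,p)$ the binomial distribution; $a\wedge b=\min\{a,b\}$. *)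

(* Defs.v *)
From Stdlib Require Import Reals Arith.
From Coquelicot Require Import Coquelicot.
Open Scope R_scope.

Definition poisson_pmf (lam : R) (k : nat) : R :=
  exp (- lam) * lam ^ k / INR (Factorial.fact k).

Definition binom_pmf (n : nat) (p : R) (k : nat) : R :=
  if Nat.leb k n then Binomial.C n k * p ^ k * (1 - p) ^ (n - k) else 0.

Inductive law := Poi | Bin.

Definition law_pmf (L : law) (n : nat) (lam : R) : nat -> R :=
  match L with
  | Poi => poisson_pmf lam
  | Bin => binom_pmf n (lam / INR n)
  end.

Definition prob_ge (f : nat -> R) (a : R) : R :=
  Series (fun k => if Rle_dec a (INR k) then f k else 0).
Definition prob_le (f : nat -> R) (a : R) : R :=
  Series (fun k => if Rle_dec (INR k) a then f k else 0).

(* Main.v *)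
Require Import Defs.
From Stdlib Require Import Reals Lra Lia Psatz.
From Coquelicot Require Import Coquelicot.
Open Scope R_scope.

Lemma iss_plus (a b : nat -> R) (la lb : R) : is_series a la -> is_series b lb ->
  is_series (fun n => a n + b n) (la + lb).
Proof. intros Ha Hb. exact (is_series_plus _ _ _ _ Ha Hb). Qed.

Lemma iss_scal (c : R) (a : nat -> R) (l : R) : is_series a l ->
  is_series (fun n => c * a n) (c * l).
Proof. intros Ha. exact (is_series_scal c _ _ Ha). Qed.

Lemma iss_ext (a b : nat -> R) (l l' : R) : (forall n, a n = b n) -> l = l' -> is_series a l -> is_series b l'.
Proof. intros H <- Ha. exact (is_series_ext _ _ _ H Ha). Qed.

Lemma iss_shift (u v : nat -> R) (l : R) : u 0%nat = 0 -> (forall j, u (S j) = v j) ->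
  is_series v l -> is_series u l.
Proof.
  intros H0 HS Hv. apply is_series_decr_1.
  change (is_series (fun k => u (S k)) (l + - u 0%nat)).
  rewrite H0, Ropp_0, Rplus_0_r.
  exact (is_series_ext _ _ _ (fun j => eq_sym (HS j)) Hv).
Qed.

Lemma iss_zero : is_series (fun _ : nat => 0) 0.
Proof.
  apply (iss_ext (fun n => 0 * 0) _ _ _ (fun n => Rmult_0_l 0) (Rmult_0_l 0)).
  Abort.

Lemma iss_finite (f : nat -> R) N : (forall k, (N < k)%nat -> f k = 0) ->
  is_series f (sum_f_R0 f N).
Proof.
  intros Hz.
  assert (Hk : forall k, sum_f_R0 f (N + k) = sum_f_R0 f N).
  { induction k. - now rewrite Nat.add_0_r.
    - rewrite Nat.add_succ_r. simpl. rewrite IHk, Hz by lia. ring. }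
  assert (H : is_lim_seq (sum_n f) (sum_f_R0 f N)); [| exact H].
  apply (is_lim_seq_ext_loc (fun _ => sum_f_R0 f N)).
  - exists N. intros n Hn. rewrite sum_n_Reals.
    replace n with (N + (n - N))%nat by lia. now rewrite Hk.
  - apply is_lim_seq_const.
Qed.

Lemma poi_sum lam : is_series (poisson_pmf lam) 1.
Proof.
  pose proof (is_exp_Reals lam) as H. unfold is_pseries in H.
  apply (iss_scal (exp (- lam))) in H.
  revert H. apply iss_ext.
  - intro n. unfold poisson_pmf. change (exp (- lam) * (pow_n lam n * / INR (Factorial.fact n)) = exp (- lam) * lam ^ n / INR (Factorial.fact n)).
    rewrite pow_n_pow. unfold Rdiv. ring.
  - rewrite <- exp_plus. rewrite Rplus_opp_l. apply exp_0.
Qed.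

Lemma var_lemma (f : nat -> R) (lam mu nu : R) : is_series f 1 ->
  is_series (fun k => INR k * f k) mu ->
  is_series (fun k => INR k * (INR k - 1) * f k) nu ->
  is_series (fun k => (INR k - lam)^2 * f k) (nu + mu - 2*lam*mu + lam^2).
Proof.
  intros H1 Hb Hc.
  pose proof (iss_plus _ _ _ _ Hc (iss_plus _ _ _ _ (iss_scal (1 - 2*lam) _ _ Hb) (iss_scal (lam^2) _ _ H1))) as H.
  revert H. apply iss_ext.
  - intro n. ring.
  - ring.
Qed.

Lemma poi_b lam : is_series (fun k => INR k * poisson_pmf lam k) lam.
Proof.
  apply (iss_shift _ (fun j => lam * poisson_pmf lam j)).
  - simpl; ring.
  - intro j. unfold poisson_pmf. change (Factorial.fact (S j)) with (S j * Factorial.fact j)%nat.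
    rewrite mult_INR. simpl pow. field. split. apply INR_fact_neq_0.
    rewrite S_INR. pose proof (pos_INR j). lra.
  - eapply iss_ext; [intro; reflexivity| | apply iss_scal, poi_sum]. ring.
Qed.

Lemma poi_c lam : is_series (fun k => INR k * (INR k - 1) * poisson_pmf lam k) (lam * lam).
Proof.
  apply (iss_shift _ (fun j => lam * (INR j * poisson_pmf lam j))).
  - simpl; ring.
  - intro j. unfold poisson_pmf. change (Factorial.fact (S j)) with (S j * Factorial.fact j)%nat.
    rewrite mult_INR. simpl pow. rewrite S_INR. field. split. apply INR_fact_neq_0.
    pose proof (pos_INR j). lra.
  - apply iss_scal, poi_b.
Qed.

Section Bin.
Variable p : R.
Definition B m := binom_pmf m p.

Lemma bin_sum m : is_series (B m) 1.
Proof.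
  eapply iss_ext; [ intro; reflexivity | | apply (iss_finite _ m) ].
  - rewrite <- (pow1 m). replace 1 with (p + (1 - p)) at 1 by ring.
    rewrite binomial. apply sum_eq. intros i Hi. unfold B, binom_pmf.
    replace (Nat.leb i m) with true. reflexivity. symmetry. now apply Nat.leb_le.
  - intros k Hk. unfold B, binom_pmf. replace (Nat.leb k m) with false. reflexivity.
    symmetry. apply Nat.leb_gt. lia.
Qed.

Lemma bin_shift m j : INR (S j) * B (S m) (S j) = INR (S m) * p * B m j.
Proof.
  unfold B, binom_pmf. change (Nat.leb (S j) (S m)) with (Nat.leb j m).
  destruct (Nat.leb j m) eqn:E; [|ring].
  change (S m - S j)%nat with (m - j)%nat.
  unfold Binomial.C. change (Factorial.fact (S m)) with (S m * Factorial.fact m)%nat.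
  change (Factorial.fact (S j)) with (S j * Factorial.fact j)%nat. rewrite !mult_INR.
  replace (S m - S j)%nat with (m - j)%nat by lia. simpl pow. field. repeat split; try apply INR_fact_neq_0.
  rewrite S_INR. pose proof (pos_INR j). lra.
Qed.

Lemma B0 j : B 0 (S j) = 0.
Proof. reflexivity. Qed.

Lemma bin_b m : is_series (fun k => INR k * B m k) (INR m * p).
Proof.
  destruct m as [|m].
  - eapply iss_ext; [intro; reflexivity| | apply (iss_finite _ 0)].
    + simpl. ring.
    + intros k Hk. destruct k. lia. rewrite B0. ring.
  - apply (iss_shift _ (fun j => INR (S m) * p * B m j)).
    + simpl; ring.
    + intro j. apply bin_shift.
    + eapply iss_ext; [intro; reflexivity| | apply iss_scal, bin_sum]. ring.
Qed.

Lemma bin_c m : is_series (fun k => INR k * (INR k - 1) * B m k) (INR m * (INR m - 1) * p^2).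
Proof.
  destruct m as [|m].
  - eapply iss_ext; [intro; reflexivity| | apply (iss_finite _ 0)].
    + simpl. ring.
    + intros k Hk. destruct k. lia. rewrite B0. ring.
  - apply (iss_shift _ (fun j => INR (S m) * p * (INR j * B m j))).
    + simpl; ring.
    + intro j. transitivity (INR j * (INR (S j) * B (S m) (S j))). rewrite S_INR; ring. rewrite bin_shift; ring.
    + eapply iss_ext; [intro; reflexivity| | apply iss_scal, bin_b].
      rewrite S_INR. ring.
Qed.
End Bin.

Lemma law_facts n L lam : (1 <= n)%nat -> 0 <= lam -> lam <= INR n ->
  (forall k, 0 <= law_pmf L n lam k) /\ is_series (law_pmf L n lam) 1 /\
  exists V, V <= lam /\ is_series (fun k => (INR k - lam)^2 * law_pmf L n lam k) V.
Proof.
  intros Hn H0 Hl.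
  assert (Hn' : 1 <= INR n) by (apply (le_INR 1); exact Hn).
  destruct L; simpl.
  - split; [|split].
    + intro k. unfold poisson_pmf. apply Rmult_le_pos.
      * apply Rmult_le_pos. apply Rlt_le, exp_pos. apply pow_le; lra.
      * apply Rlt_le, Rinv_0_lt_compat, INR_fact_lt_0.
    + apply poi_sum.
    + exists (lam * lam + lam - 2 * lam * lam + lam ^ 2). split. nra.
      apply var_lemma. apply poi_sum. apply poi_b. apply poi_c.
  - set (p := lam / INR n).
    assert (Hnp : INR n * p = lam) by (unfold p; field; lra).
    assert (Hp0 : 0 <= p) by (unfold p; apply Rmult_le_pos; [lra| apply Rlt_le, Rinv_0_lt_compat; lra]).
    assert (Hp1 : p <= 1) by (apply Rmult_le_reg_l with (INR n); [lra|]; rewrite Hnp; lra).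
    split; [|split].
    + intro k. unfold binom_pmf. destruct (Nat.leb k n); [|lra].
      apply Rmult_le_pos; [apply Rmult_le_pos|apply pow_le; lra]; [|apply pow_le; lra].
      unfold Binomial.C. apply Rlt_le, Rdiv_lt_0_compat. apply INR_fact_lt_0.
      apply Rmult_lt_0_compat; apply INR_fact_lt_0.
    + apply (bin_sum p n).
    + exists (INR n * (INR n - 1) * p^2 + INR n * p - 2 * lam * (INR n * p) + lam ^ 2).
      split.
      * assert (E : INR n * (INR n - 1) * p^2 = lam * lam - lam * p) by (rewrite <- Hnp; ring).
        rewrite E, Hnp. nra.
      * apply var_lemma. apply (bin_sum p n). apply (bin_b p n). apply (bin_c p n).
Qed.

Lemma cheb (f g : nat -> R) lam V d : 0 < d -> (forall k, 0 <= f k) -> is_series f 1 ->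
  is_series (fun k => (INR k - lam)^2 * f k) V ->
  (forall k, g k = 0 \/ (g k = f k /\ d^2 <= (INR k - lam)^2)) ->
  Series g <= 1 /\ Series g * d^2 <= V.
Proof.
  intros Hd Hf H1 HV Hg. split.
  - rewrite <- (is_series_unique _ _ H1). apply Series_le.
    + intro k. destruct (Hg k) as [E|[E _]]; rewrite E; pose proof (Hf k); lra.
    + exists 1. exact H1.
  - assert (Hs : is_series (fun k => / d^2 * ((INR k - lam)^2 * f k)) (/ d^2 * V)) by (apply iss_scal, HV).
    assert (Hle : Series g <= / d^2 * V).
    { rewrite <- (is_series_unique _ _ Hs). apply Series_le.
      + intro k. pose proof (Hf k). assert (0 < d^2) by nra.
        destruct (Hg k) as [E|[E Hk]]; rewrite E.
        * split. lra. apply Rmult_le_pos. apply Rlt_le, Rinv_0_lt_compat; lra. apply Rmult_le_pos; [apply pow2_ge_0 | lra].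
        * split. lra. apply Rmult_le_reg_l with (d^2). lra.
          rewrite <- Rmult_assoc, Rinv_r by lra. nra.
      + exists (/ d^2 * V). exact Hs. }
    assert (0 < d^2) by nra.
    apply Rmult_le_reg_r with (/ d^2). apply Rinv_0_lt_compat; lra.
    rewrite Rmult_assoc, Rinv_r by lra. lra.
Qed.

Theorem lemma7 :
  exists M1 M2 : R, 0 < M1 /\ 0 < M2 /\
  forall (n : nat) (L : law) (lam1 : R),
    (1 <= n)%nat -> 0 <= lam1 -> lam1 <= INR n ->
    (forall lam2 : R, 0 <= lam2 -> lam2 <= INR n -> lam1 <= lam2 ->
       (lam2 - lam1) * prob_ge (law_pmf L n lam1) lam2
         <= M1 * Rmin lam2 (sqrt lam2)) /\
    (forall lam2 : R, 1 <= lam2 -> lam2 <= lam1 ->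
       (lam1 - lam2) * prob_le (law_pmf L n lam1) lam2
         <= M2 * sqrt lam2).
Proof.
  exists 1, 2. split; [lra|split; [lra|]].
  intros n L lam1 Hn H0 Hl.
  destruct (law_facts n L lam1 Hn H0 Hl) as [Hf [H1 [V [HVl HV]]]].
  split.
  - intros lam2 H20 H2n H12.
    set (s := sqrt lam2).
    assert (Hs0 : 0 <= s) by apply sqrt_pos.
    assert (Hss : s * s = lam2) by (apply sqrt_sqrt; lra).
    set (P := prob_ge (law_pmf L n lam1) lam2).
    destruct (Req_dec lam2 lam1) as [E|NE].
    + rewrite E, Rminus_diag, Rmult_0_l. unfold Rmin.
      destruct (Rle_dec _ _); lra.
    + assert (Hd : 0 < lam2 - lam1) by lra.
      destruct (cheb (law_pmf L n lam1) (fun k => if Rle_dec lam2 (INR k) then law_pmf L n lam1 k else 0)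
                 lam1 V (lam2 - lam1) Hd Hf H1 HV) as [HP1 HPV].
      { intro k. destruct (Rle_dec lam2 (INR k)); [right; split; [reflexivity| nra] | left; reflexivity]. }
      fold (prob_ge (law_pmf L n lam1) lam2) in HP1, HPV. fold P in HP1, HPV.
      destruct (Rle_dec lam2 1) as [Hs1|Hs1].
      * rewrite Rmin_left.
        -- nra.
        -- fold s. nra.
      * rewrite Rmin_right by (fold s; nra). fold s.
        assert (1 <= s) by nra.
        destruct (Rle_dec (lam2 - lam1) s). nra.
        assert (Hq : (lam2 - lam1) * ((lam2 - lam1) * P) <= s * s) by nra.
        nra.
  - intros lam2 H21 H12.
    set (s := sqrt lam2).
    assert (Hs0 : 0 <= s) by apply sqrt_pos.
    assert (Hss : s * s = lam2) by (apply sqrt_sqrt; lra).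
    assert (1 <= s) by nra.
    set (P := prob_le (law_pmf L n lam1) lam2).
    destruct (Req_dec lam2 lam1) as [E|NE].
    + rewrite E, Rminus_diag, Rmult_0_l. fold s. lra.
    + assert (Hd : 0 < lam1 - lam2) by lra.
      destruct (cheb (law_pmf L n lam1) (fun k => if Rle_dec (INR k) lam2 then law_pmf L n lam1 k else 0)
                 lam1 V (lam1 - lam2) Hd Hf H1 HV) as [HP1 HPV].
      { intro k. destruct (Rle_dec (INR k) lam2); [right; split; [reflexivity| nra] | left; reflexivity]. }
      fold (prob_le (law_pmf L n lam1) lam2) in HP1, HPV. fold P in HP1, HPV.
      fold s.
      destruct (Rle_dec (lam1 - lam2) (2 * s)). nra.
      assert (Hq : (lam1 - lam2) * ((lam1 - lam2) * P) <= s * s + (lam1 - lam2)) by nra.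
      assert (Hr : s * s + (lam1 - lam2) <= 2 * s * (lam1 - lam2)) by nra.
      nra.
Qed.
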